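(* Let $L,K,\tau$ be positive integers, $K_{tot}=KL$, and index users by $u=(i,j)$, $i\in\{1,\dots,L\}$, $j\in\{1,\dots,K\}$. Let $\mathbf{q}_u\in\mathbb{R}^\tau$ be unit-norm pilot sequences and $\rho_{uv}=\mathbf{q}_u^T\mathbf{q}_v$. Let $P_u>0$ and $\delta_u>0$ for all users $u$, and define $$\overline{\phi}_u=\frac{P_u}{\delta_u\sum_{v}\rho_{uv}^2P_v/\delta_v-P_u},$$ where the sum is over all $K_{tot}$ users $v$, assuming each denominator is positive. Let $\gamma_u>0$ be SINR requirements such that $\overline{\phi}_u\ge\gamma_u$ for every user $u$. Then $$K_{tot}\le\sqrt{\tau\sum_{i=1}^L\sum_{j=1}^K\frac{1+\gamma_{i_j}}{\gamma_{i_j}}}.$$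
   Context: In the paper, $\overline{\phi}_u$ is the (lower bound on the) asymptotic downlink SINR of user $u$ in a multi-cell massive MIMO network with MRT precoding and least-squares channel estimation as the number of base-station antennas tends to infinity, $P_u$ is the downlink transmit power for user $u$, and $\delta_u$ is the normalization constant of its MRT precoder; $\gamma_{i_j}$ is the SINR requirement of user $j$ in cell $i$. The right-hand side is the paper's upper bound on the user load (number of simultaneously served users whose SINR requirements are met). *)

(* Defs.v *)
From mathcomp Require Import all_boot all_order all_algebra.
Set Implicit Arguments. Unset Strict Implicit. Unset Printing Implicit Defensive.
Import Order.TTheory GRing.Theory Num.Theory.
Local Open Scope ring_scope.

Definition user (L K : nat) := ('I_L * 'I_K)%type.

Definition rho (R : ringType) (L K tau : nat) (q : user L K -> 'I_tau -> R)
  (u v : user L K) : R := \sum_(k < tau) q u k * q v k.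

Definition phibar_den (R : fieldType) (L K tau : nat) (q : user L K -> 'I_tau -> R)
  (P delta : user L K -> R) (u : user L K) : R :=
  delta u * (\sum_(v : user L K) (rho q u v) ^+ 2 * P v / delta v) - P u.

Definition phibar (R : fieldType) (L K tau : nat) (q : user L K -> 'I_tau -> R)
  (P delta : user L K -> R) (u : user L K) : R :=
  P u / phibar_den q P delta u.

(* Main.v *)
Require Import Defs.
From mathcomp Require Import all_boot all_order all_algebra.
From mathcomp Require Import ring lra.
Import Order.TTheory GRing.Theory Num.Theory.
Local Open Scope ring_scope.

Lemma cs (R : realFieldType) (I : finType) (a : I -> R) :
  (\sum_i a i) ^+ 2 <= #|I|%:R * \sum_i a i ^+ 2.
Proof.
have H : 0 <= \sum_i \sum_j (a i - a j) ^+ 2.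
  by apply: sumr_ge0 => i _; apply: sumr_ge0 => j _; exact: sqr_ge0.
have E : \sum_i \sum_j (a i - a j) ^+ 2 =
   \sum_i (#|I|%:R * a i ^+ 2 + \sum_i a i ^+ 2 - (a i * \sum_i a i) *+ 2).
  apply: eq_bigr => i _.
  rewrite (eq_bigr (fun j => a i ^+ 2 + a j ^+ 2 - (a i * a j) *+ 2)); last first.
    by move=> j _; rewrite sqrrB; ring.
  rewrite !big_split /= sumrN sumr_const sumrMnl mulr_sumr mulr_natl.
  by [].
rewrite E !big_split /= sumrN sumr_const sumrMnl -mulr_sumr -mulr_suml in H.
move: H.
set S1 := \sum_i a i. set S2 := \sum_i a i ^+ 2.
rewrite -mulr_natl -expr2 -(mulr_natr (S1 ^+ 2)) => H. change (#|xpredT|%:R) with (#|I|%:R : R) in H. set n := (#|I|%:R : R) in H *. nra.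
Qed.


Lemma two_le (R : realFieldType) (x y : R) : 0 < x -> 0 < y -> 2 <= x / y + y / x.
Proof.
move=> hx hy.
have -> : x / y + y / x = 2 + (x - y) ^+ 2 / (x * y).
  by field; apply/andP; split; rewrite gt_eqF.
rewrite lerDl; apply: divr_ge0; [exact: sqr_ge0 | exact: mulr_ge0 (ltW hx) (ltW hy)].
Qed.

Lemma sq_sum (R : comRingType) (I : finType) (a : I -> R) :
  (\sum_i a i) ^+ 2 = \sum_i \sum_j a i * a j.
Proof.
rewrite expr2 big_distrl /=; apply: eq_bigr => i _; by rewrite big_distrr.
Qed.

Theorem mainTheorem2 (R : rcfType) (L K tau : nat)
  (hL : (0 < L)%N) (hK : (0 < K)%N) (htau : (0 < tau)%N)
  (q : user L K -> 'I_tau -> R) (P delta gamma : user L K -> R)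
  (hq : forall u, rho q u u = 1)
  (hP : forall u, 0 < P u) (hdelta : forall u, 0 < delta u)
  (hden : forall u, 0 < phibar_den q P delta u)
  (hgamma : forall u, 0 < gamma u)
  (hreq : forall u, gamma u <= phibar q P delta u) :
  (L * K)%:R <= Num.sqrt (tau%:R * \sum_(i < L) \sum_(j < K)
                              (1 + gamma (i, j)) / gamma (i, j)).
Proof.
pose w u := P u / delta u.
have hw : forall u, 0 < w u by move=> u; apply: divr_gt0.
pose c u := (1 + gamma u) / gamma u.
pose r u v := rho q u v ^+ 2.
have rsym : forall u v, r u v = r v u.
  by move=> u v; rewrite /r /rho; congr (_ ^+ 2); apply: eq_bigr => k _; rewrite mulrC.
have step1 : forall u, \sum_v r u v * (w v / w u) <= c u.
  move=> u.
  have e1 : \sum_v r u v * (w v / w u) = (\sum_v r u v * w v) / w u.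
    by rewrite mulr_suml; apply: eq_bigr => v _; rewrite mulrA.
  have e2 : \sum_v r u v * w v = \sum_(v : user L K) (rho q u v) ^+ 2 * P v / delta v.
    by apply: eq_bigr => v _; rewrite /r /w mulrA.
  have h1 := hreq u; have h2 := hden u.
  rewrite /phibar in h1; rewrite ler_pdivlMr // in h1.
  move: h1 h2; rewrite /phibar_den -e2 e1.
  set S := \sum_v r u v * w v => h1 h2.
  have hg := hgamma u; have hd := hdelta u; have hp := hP u.
  rewrite /c /w -subr_ge0.
  have -> : (1 + gamma u) / gamma u - S / (P u / delta u) =
     (P u - (delta u * S - P u) * gamma u) / (gamma u * P u).
    by field; rewrite !gt_eqF.
  apply: divr_ge0; first by rewrite subr_ge0 mulrC.
  by apply: mulr_ge0; apply: ltW.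
have step2 : \sum_u \sum_v r u v <= \sum_u \sum_v r u v * (w v / w u).
  have h : \sum_u \sum_v r u v *+ 2 <=
           \sum_u \sum_v (r u v * (w v / w u) + r u v * (w u / w v)).
    apply: ler_sum => u _; apply: ler_sum => v _.
    rewrite -mulrDr -mulr_natr; apply: ler_wpM2l; first exact: sqr_ge0.
    exact: two_le.
  have eL : \sum_u \sum_v r u v *+ 2 = (\sum_u \sum_v r u v) *+ 2.
    by rewrite -sumrMnl; apply: eq_bigr => u _; rewrite sumrMnl.
  have eR : \sum_u \sum_v (r u v * (w v / w u) + r u v * (w u / w v)) =
            (\sum_u \sum_v r u v * (w v / w u)) *+ 2.
    rewrite (eq_bigr (fun u => \sum_v r u v * (w v / w u) + \sum_v r u v * (w u / w v))); last first.
      by move=> u _; rewrite big_split.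
    rewrite big_split /= mulr2n; congr (_ + _).
    rewrite exchange_big; apply: eq_bigr => u _; apply: eq_bigr => v _.
    by rewrite rsym.
  by rewrite eL eR lerMn2r /= in h.
pose M k l := \sum_u q u k * q u l.
have eB : \sum_u \sum_v r u v = \sum_k \sum_l M k l ^+ 2.
  transitivity (\sum_u \sum_v \sum_k \sum_l (q u k * q v k) * (q u l * q v l)).
    by apply: eq_bigr => u _; apply: eq_bigr => v _; rewrite /r /rho sq_sum.
  under eq_bigr => u _ do rewrite exchange_big.
  rewrite exchange_big.
  under eq_bigr => k _ do under eq_bigr => u _ do rewrite exchange_big.
  under eq_bigr => k _ do rewrite exchange_big.
  apply: eq_bigr => k _; apply: eq_bigr => l _.
  rewrite /M sq_sum; apply: eq_bigr => u _; apply: eq_bigr => v _; ring.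
have eT : \sum_k M k k = #|{: user L K}|%:R.
  rewrite /M exchange_big /=.
  rewrite (eq_bigr (fun _ => 1)); last by move=> u _; exact: hq.
  by rewrite sumr_const.
have step3 : #|{: user L K}|%:R ^+ 2 <= tau%:R * \sum_u \sum_v r u v.
  rewrite -eT eB.
  have := @cs R _ (fun k => M k k); rewrite card_ord => H; apply: (le_trans H).
  apply: ler_wpM2l; first exact: ler0n.
  apply: ler_sum => k _; rewrite (bigD1 k) //= lerDl.
  by apply: sumr_ge0 => l _; exact: sqr_ge0.
have e4 : \sum_(i < L) \sum_(j < K) (1 + gamma (i, j)) / gamma (i, j) = \sum_u c u.
  by rewrite pair_bigA; apply: eq_bigr => [[i j]] _.
have cge0 : 0 <= \sum_u c u.
  apply: sumr_ge0 => u _; apply: divr_ge0; last exact: ltW.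
  by apply: addr_ge0 => //; exact: ltW.
have hN : (L * K)%:R = #|{: user L K}|%:R :> R.
  by rewrite /user card_prod !card_ord.
rewrite e4 hN.
rewrite -(ger0_norm (ler0n R #|{: user L K}|)) -sqrtr_sqr ler_sqrt; last first.
  by apply: mulr_ge0 => //; exact: ler0n.
apply: (le_trans step3); apply: ler_wpM2l; first exact: ler0n.
apply: (le_trans step2); exact: ler_sum.
Qed.
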